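(* Let $t\ge 0$ be an integer and $p$ an integer with $1\le p\le\left\lfloor\frac{t+5}{4}\right\rfloor$; set $m=t+3-2p$. Let $r_1<r_2<\cdots<r_p$ be positive real numbers and $R=\{r_1,\dots,r_p\}$. For integers $k,j$ let $$b_{k,j}=\left(r_k\cos\left(\tfrac{2j+k}{m}\pi\right),\ r_k\sin\left(\tfrac{2j+k}{m}\pi\right)\right),$$ and let $\mathcal B=\{b_{k,j}:1\le j\le m,\ 1\le k\le p\}$. Define $w:\mathcal B\to\mathbb{R}$ by $w(b_{k,j})=\frac{1}{r_1^m}$ if $k=1$, and $$w(b_{k,j})=(-1)^k\frac{1}{r_k^m}\prod_{2\le l\le p,\ l\ne k}\frac{r_1^2-r_l^2}{r_k^2-r_l^2}\quad\text{if }2\le k\le p.$$ Then $w$ takes only positive values, $\mathcal B$ is antipodal when $t$ is odd, and $(\mathcal B,w)$ is a tight Euclidean $t$-design in $\mathbb{R}^2$ with norm spectrum $R$.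
   Context: For $r>0$, $S_r^{n-1}\subset\mathbb{R}^n$ is the sphere of radius $r$ centered at the origin and $\overline{f}_{S_r^{n-1}}$ the average of $f$ over it with respect to surface measure. For a finite $\mathcal X\subset\mathbb{R}^n\setminus\{\mathbf 0\}$ with norm spectrum $R=\{\|\mathbf x\|:\mathbf x\in\mathcal X\}$ and weight function $w:\mathcal X\to\mathbb{R}_{>0}$ with $W_r=\sum_{\|\mathbf x\|=r}w(\mathbf x)$, $(\mathcal X,w)$ is a Euclidean $t$-design if $\sum_{r\in R}W_r\overline{f}_{S_r^{n-1}}=\sum_{\mathbf x\in\mathcal X}w(\mathbf x)f(\mathbf x)$ for all real polynomials $f$ of total degree $\le t$. A set is antipodal if $\mathbf x\in\mathcal X\Rightarrow-\mathbf x\in\mathcal X$ (for weighted sets also $w(-\mathbf x)=w(\mathbf x)$). With $d(s)=\binom{s+n-1}{n-1}$ (and $d(s)=0$ for $s<0$), $N_k=d\left(\lfloor t/2\rfloor+2-2k\right)+d\left(\lfloor (t-1)/2\rfloor+2-2k\right)$ and $N(n,p,t)=\sum_{k=1}^pN_k$. A Euclidean $t$-design in $\mathbb{R}^n$ whose norm spectrum has $p$ elements is called tight if it has exactly $N(n,p,t)$ points. *)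

(* Defs.v *)
From Stdlib Require Import Reals Lra Lia ZArith Arith List.
From Coquelicot Require Import Coquelicot.
Open Scope R_scope.

Definition pt := (R * R)%type.

Definition norm2 (x : pt) : R := sqrt (fst x ^ 2 + snd x ^ 2).

Definition lsum (X : list pt) (g : pt -> R) : R :=
  fold_right Rplus 0 (map g X).

Definition is_poly_le (t : nat) (f : pt -> R) : Prop :=
  exists c : nat -> nat -> R, forall x y : R,
    f (x, y) = sum_f_R0 (fun a => sum_f_R0 (fun b => c a b * x ^ a * y ^ b) (t - a)) t.

(* Average of f over the circle S_r^1 w.r.t. surface (arc-length) measure:
   (1/(2 pi r)) * int_0^{2pi} f(r cos th, r sin th) r d th. *)
Definition circle_avg (r : R) (f : pt -> R) : R :=
  / (2 * PI) * RInt (fun th => f (r * cos th, r * sin th)) 0 (2 * PI).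

Definition norm_spectrum (X : list pt) : list R :=
  nodup Req_EM_T (map norm2 X).

Definition Wr (X : list pt) (w : pt -> R) (r : R) : R :=
  lsum (filter (fun x => if Req_EM_T (norm2 x) r then true else false) X) w.

Definition weighted_set (X : list pt) (w : pt -> R) : Prop :=
  NoDup X /\ (forall x, In x X -> x <> (0, 0)) /\ (forall x, In x X -> 0 < w x).

Definition euclidean_design (X : list pt) (w : pt -> R) (t : nat) : Prop :=
  weighted_set X w /\
  forall f : pt -> R, is_poly_le t f ->
    fold_right Rplus 0 (map (fun r => Wr X w r * circle_avg r f) (norm_spectrum X))
    = lsum X (fun x => w x * f x).

Definition antipodal (X : list pt) (w : pt -> R) : Prop :=
  forall x, In x X -> In (- fst x, - snd x) X /\ w (- fst x, - snd x) = w x.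

Fixpoint binom (n k : nat) : nat :=
  match n, k with
  | _, O => 1%nat
  | O, S _ => 0%nat
  | S n', S k' => (binom n' k' + binom n' k)%nat
  end.

Definition dZ (n : nat) (s : Z) : nat :=
  if (s <? 0)%Z then 0%nat else binom (Z.to_nat s + n - 1) (n - 1).

Definition N_k (n t k : nat) : nat :=
  (dZ n (Z.of_nat t / 2 + 2 - 2 * Z.of_nat k)%Z
   + dZ n ((Z.of_nat t - 1) / 2 + 2 - 2 * Z.of_nat k)%Z)%nat.

Definition N_npt (n p t : nat) : nat :=
  fold_right Nat.add 0%nat (map (N_k n t) (seq 1 p)).

Definition tight_design (X : list pt) (w : pt -> R) (t : nat) : Prop :=
  euclidean_design X w t /\
  length X = N_npt 2 (length (norm_spectrum X)) t.

Definition bpt (r : nat -> R) (m k j : nat) : pt :=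
  (r k * cos (INR (2 * j + k) / INR m * PI), r k * sin (INR (2 * j + k) / INR m * PI)).

Definition Bset (r : nat -> R) (p m : nat) : list pt :=
  flat_map (fun k => map (fun j => bpt r m k j) (seq 1 m)) (seq 1 p).

Definition weight_formula (r : nat -> R) (p m k : nat) : R :=
  if Nat.eqb k 1 then / (r 1%nat ^ m)
  else (-1) ^ k * / (r k ^ m) *
       fold_right Rmult 1
         (map (fun l => (r 1%nat ^ 2 - r l ^ 2) / (r k ^ 2 - r l ^ 2))
              (filter (fun l => negb (Nat.eqb l k)) (seq 2 (p - 1)))).

(* Main.v *)
Require Import Defs.
From Stdlib Require Import Reals Lra Lia ZArith Arith List Permutation Classical.
From Coquelicot Require Import Coquelicot.
Import ListNotations.
Open Scope R_scope.

Definition tterm (e : nat * R * R) (x : R) : R :=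
  match e with (n, a, b) => a * cos (INR n * x) + b * sin (INR n * x) end.
Definition tev (L : list (nat * R * R)) (x : R) : R :=
  fold_right Rplus 0 (map (fun e => tterm e x) L).

Definition mcos (e : nat * R * R) : list (nat * R * R) :=
  match e with (n, a, b) => match n with
   | O => [(1%nat, a, 0)]
   | S n' => [(S (S n'), a / 2, b / 2); (n', a / 2, b / 2)] end end.
Definition msin (e : nat * R * R) : list (nat * R * R) :=
  match e with (n, a, b) => match n with
   | O => [(1%nat, 0, a)]
   | S n' => [(S (S n'), - b / 2, a / 2); (n', b / 2, - a / 2)] end end.

Lemma tev_app L1 L2 x : tev (L1 ++ L2) x = tev L1 x + tev L2 x.
Proof. unfold tev. rewrite map_app, fold_right_app.
  induction L1; simpl; [ring| rewrite IHL1; ring]. Qed.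

Lemma tev_cons e L x : tev (e :: L) x = tterm e x + tev L x.
Proof. reflexivity. Qed.

Lemma tev_nil x : tev [] x = 0.
Proof. reflexivity. Qed.

Lemma trig_aux n x :
  cos (INR (S (S n)) * x) = cos (INR (S n) * x) * cos x - sin (INR (S n) * x) * sin x /\
  sin (INR (S (S n)) * x) = sin (INR (S n) * x) * cos x + cos (INR (S n) * x) * sin x /\
  cos (INR n * x) = cos (INR (S n) * x) * cos x + sin (INR (S n) * x) * sin x /\
  sin (INR n * x) = sin (INR (S n) * x) * cos x - cos (INR (S n) * x) * sin x.
Proof.
  replace (INR (S (S n)) * x) with (INR (S n) * x + x) by (rewrite (S_INR (S n)); ring).
  replace (INR n * x) with (INR (S n) * x - x) by (rewrite (S_INR n); ring).
  rewrite cos_plus, sin_plus, cos_minus, sin_minus. repeat split; ring.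
Qed.

Lemma tev_mcos L x : tev (flat_map mcos L) x = cos x * tev L x.
Proof.
  induction L as [|[[n a] b] L IH]; simpl flat_map.
  - rewrite !tev_nil; ring.
  - rewrite tev_app, IH, tev_cons. destruct n as [|n].
    + unfold tev, tterm; simpl. rewrite ?Rmult_0_l, ?Rmult_1_l, ?cos_0, ?sin_0. ring.
    + destruct (trig_aux n x) as (H1 & H2 & H3 & H4). rewrite !tev_cons, tev_nil; cbv beta iota delta [tterm].
      rewrite H1, H2, H3, H4. field.
Qed.

Lemma tev_msin L x : tev (flat_map msin L) x = sin x * tev L x.
Proof.
  induction L as [|[[n a] b] L IH]; simpl flat_map.
  - rewrite !tev_nil; ring.
  - rewrite tev_app, IH, tev_cons. destruct n as [|n].
    + unfold tev, tterm; simpl. rewrite ?Rmult_0_l, ?Rmult_1_l, ?cos_0, ?sin_0. ring.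
    + destruct (trig_aux n x) as (H1 & H2 & H3 & H4). rewrite !tev_cons, tev_nil; cbv beta iota delta [tterm].
      rewrite H1, H2, H3, H4. 
      pose proof (sin2_cos2 x) as Hs; unfold Rsqr in Hs.
      replace (sin x * sin x) with (1 - cos x * cos x) by lra. field.
Qed.


Definition c0 (L : list (nat * R * R)) : R :=
  fold_right Rplus 0 (map (fun e => if Nat.eqb (fst (fst e)) 0 then snd (fst e) else 0) L).

Lemma sin_nat2PI n : sin (INR n * (2 * PI)) = 0.
Proof. replace (INR n * (2 * PI)) with (0 + 2 * INR n * PI) by ring. rewrite sin_period. apply sin_0. Qed.
Lemma cos_nat2PI n : cos (INR n * (2 * PI)) = 1.
Proof. replace (INR n * (2 * PI)) with (0 + 2 * INR n * PI) by ring. rewrite cos_period. apply cos_0. Qed.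

Lemma is_RInt_val (f : R -> R) a b (l l' : R) : is_RInt f a b l -> l = l' -> is_RInt f a b l'.
Proof. intros H ->; exact H. Qed.

Lemma scalR (x y : R) : scal x y = x * y.
Proof. reflexivity. Qed.
Lemma plusR (x y : R) : plus x y = x + y.
Proof. reflexivity. Qed.
Lemma minusR (x y : R) : minus x y = x - y.
Proof. reflexivity. Qed.

Lemma is_RInt_freq (c a b : R) : c <> 0 -> sin (c * (2 * PI)) = 0 -> cos (c * (2 * PI)) = 1 ->
  is_RInt (fun x => a * cos (c * x) + b * sin (c * x)) 0 (2 * PI) 0.
Proof.
  intros Hc Hs Hco.
  eapply is_RInt_val.
  + apply (is_RInt_derive (fun x => (a * sin (c * x) - b * cos (c * x)) / c)).
    * intros x _. auto_derive; [exact I|]. field. exact Hc.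
    * intros x _. apply (ex_derive_continuous (fun x => a * cos (c * x) + b * sin (c * x))). auto_derive. exact I.
  + rewrite minusR, Hs, Hco, !Rmult_0_r, sin_0, cos_0. field. exact Hc.
Qed.

Lemma is_RInt_extR (f g : R -> R) a b (l : R) : (forall x, f x = g x) -> is_RInt f a b l -> is_RInt g a b l.
Proof. intros H; apply is_RInt_ext; intros; apply H. Qed.

Lemma is_RInt_tterm e : is_RInt (tterm e) 0 (2 * PI)
   (2 * PI * (if Nat.eqb (fst (fst e)) 0 then snd (fst e) else 0)).
Proof.
  destruct e as [[n a] b]. simpl fst; simpl snd. destruct n as [|n].
  - simpl. eapply is_RInt_extR.
    2: eapply is_RInt_val; [apply (is_RInt_const 0 (2*PI) a)|rewrite scalR; ring].
    intros x. cbv beta. unfold tterm. rewrite Rmult_0_l, cos_0, sin_0. ring.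
  - simpl Nat.eqb. cbv iota. rewrite Rmult_0_r.
    apply is_RInt_freq. apply not_0_INR; lia. apply sin_nat2PI. apply cos_nat2PI.
Qed.

Lemma is_RInt_tev L : is_RInt (tev L) 0 (2 * PI) (2 * PI * c0 L).
Proof.
  induction L as [|e L IH].
  - eapply is_RInt_extR. 2: eapply is_RInt_val; [apply (is_RInt_const 0 (2*PI) 0)|rewrite scalR; unfold c0; simpl; ring].
    intros; reflexivity.
  - eapply is_RInt_extR. 2: eapply is_RInt_val; [apply (is_RInt_plus _ _ _ _ _ _ (is_RInt_tterm e) IH)|].
    + intros; reflexivity.
    + rewrite plusR. unfold c0; simpl. ring.
Qed.


Definition ls (l : list nat) (F : nat -> R) : R := fold_right Rplus 0 (map F l).

Lemma ls_app l1 l2 F : ls (l1 ++ l2) F = ls l1 F + ls l2 F.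
Proof. unfold ls. rewrite map_app, fold_right_app. induction l1; simpl; [ring|rewrite IHl1; ring]. Qed.
Lemma ls_ext l F G : (forall j, In j l -> F j = G j) -> ls l F = ls l G.
Proof. induction l; intros H; simpl; auto. unfold ls in *; simpl. rewrite H by (left; auto). rewrite IHl; auto.
  intros; apply H; right; auto. Qed.
Lemma ls_plus l F G : ls l (fun j => F j + G j) = ls l F + ls l G.
Proof. induction l; unfold ls in *; simpl; [ring|rewrite IHl; ring]. Qed.
Lemma ls_scal l c F : ls l (fun j => c * F j) = c * ls l F.
Proof. induction l; unfold ls in *; simpl; [ring|rewrite IHl; ring]. Qed.
Lemma ls_const l c : ls l (fun _ => c) = INR (length l) * c.
Proof. induction l; unfold ls in *; simpl length; [simpl; ring|]. rewrite S_INR. simpl. rewrite IHl; ring. Qed.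
Lemma ls_zero l : ls l (fun _ => 0) = 0.
Proof. rewrite ls_const; ring. Qed.
Lemma ls_tele (G : nat -> R) N : ls (seq 1 N) (fun j => G j - G (j - 1)%nat) = G N - G 0%nat.
Proof. induction N. - unfold ls; simpl; ring.
  - rewrite seq_S, ls_app, IHN. unfold ls; simpl. replace (N - 0)%nat with N by lia. ring. Qed.

Definition phi (m k j : nat) : R := INR (2 * j + k) / INR m * PI.

Lemma cos_kPI k : cos (INR k * PI) = (-1) ^ k.
Proof. induction k. simpl; rewrite Rmult_0_l; apply cos_0.
  rewrite S_INR, Rmult_plus_distr_r, Rmult_1_l, neg_cos, IHk. simpl; ring. Qed.
Lemma sin_kPI k : sin (INR k * PI) = 0.
Proof. induction k. simpl; rewrite Rmult_0_l; apply sin_0.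
  rewrite S_INR, Rmult_plus_distr_r, Rmult_1_l, neg_sin, IHk. ring. Qed.

Lemma nphi n m k j : (1 <= m)%nat ->
  INR n * phi m k j = INR n * INR k * PI / INR m + INR j * (2 * PI * INR n / INR m).
Proof. intros Hm. unfold phi. rewrite plus_INR, mult_INR. 
  assert (INR m <> 0) by (apply not_0_INR; lia). replace (INR 2) with 2 by (simpl; ring). field; auto. Qed.

Lemma mphi m k j : (1 <= m)%nat -> INR m * phi m k j = INR k * PI + 2 * INR j * PI.
Proof. intros Hm. unfold phi. rewrite plus_INR, mult_INR. 
  assert (INR m <> 0) by (apply not_0_INR; lia). replace (INR 2) with 2 by (simpl; ring). field; auto. Qed.

Lemma sin_half_nz n m : (1 <= n)%nat -> (n < 2 * m)%nat -> n <> m -> sin (PI * INR n / INR m) <> 0.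
Proof.
  intros H1 H2 H3.
  assert (Hm : 0 < INR m) by (apply lt_0_INR; lia).
  assert (Hn : 0 < INR n) by (apply lt_0_INR; lia).
  pose proof PI_RGT_0.
  destruct (Nat.lt_ge_cases n m) as [Hl|Hl].
  - apply Rgt_not_eq, Rlt_gt, sin_gt_0.
    + apply Rdiv_lt_0_compat; nra.
    + apply lt_INR in Hl. apply Rmult_lt_reg_r with (INR m); auto.
      unfold Rdiv; rewrite Rmult_assoc, Rinv_l by lra. nra.
  - assert (Hl' : (m < n)%nat) by lia. apply lt_INR in Hl'. 
    assert (Hl2 : INR n < 2 * INR m) by (apply lt_INR in H2; rewrite mult_INR in H2; simpl in H2; lra).
    apply Rlt_not_eq, sin_lt_0.
    + apply Rmult_lt_reg_r with (INR m); auto.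
      unfold Rdiv; rewrite Rmult_assoc, Rinv_l by lra. nra.
    + apply Rmult_lt_reg_r with (INR m); auto.
      unfold Rdiv; rewrite Rmult_assoc, Rinv_l by lra. nra.
Qed.

Lemma dsum_gen n m k : (1 <= m)%nat -> (1 <= n)%nat -> (n < 2 * m)%nat -> n <> m ->
  ls (seq 1 m) (fun j => cos (INR n * phi m k j)) = 0 /\
  ls (seq 1 m) (fun j => sin (INR n * phi m k j)) = 0.
Proof.
  intros Hm H1 H2 H3.
  set (A := INR n * INR k * PI / INR m). set (h := 2 * PI * INR n / INR m).
  assert (Hs := sin_half_nz n m H1 H2 H3).
  assert (Hh : h / 2 = PI * INR n / INR m) by (unfold h; field; apply not_0_INR; lia).
  assert (Hmh : INR m * h = 2 * INR n * PI) by (unfold h; field; apply not_0_INR; lia).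
  split.
  - apply Rmult_eq_reg_l with (2 * sin (h / 2)); [|rewrite Hh; intro; apply Hs; lra].
    rewrite Rmult_0_r, <- ls_scal.
    rewrite (ls_ext _ _ (fun j => (fun j => sin (A + INR j * h + h / 2)) j - (fun j => sin (A + INR j * h + h / 2)) (j - 1)%nat)).
    + rewrite ls_tele. replace (A + INR m * h + h / 2) with ((A + INR 0 * h + h / 2) + 2 * INR n * PI) by (rewrite Hmh; simpl; ring).
      rewrite sin_period. ring.
    + intros j Hj. apply in_seq in Hj. rewrite nphi by lia. fold A h. rewrite minus_INR by lia. change (INR 1) with 1.
      replace (A + (INR j - 1) * h + h / 2) with ((A + INR j * h) - h / 2) by lra.
      rewrite sin_plus, sin_minus. ring.
  - apply Rmult_eq_reg_l with (2 * sin (h / 2)); [|rewrite Hh; intro; apply Hs; lra].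
    rewrite Rmult_0_r, <- ls_scal.
    rewrite (ls_ext _ _ (fun j => (fun j => - cos (A + INR j * h + h / 2)) j - (fun j => - cos (A + INR j * h + h / 2)) (j - 1)%nat)).
    + rewrite ls_tele. replace (A + INR m * h + h / 2) with ((A + INR 0 * h + h / 2) + 2 * INR n * PI) by (rewrite Hmh; simpl; ring).
      rewrite cos_period. ring.
    + intros j Hj. apply in_seq in Hj. rewrite nphi by lia. fold A h. rewrite minus_INR by lia. change (INR 1) with 1.
      replace (A + (INR j - 1) * h + h / 2) with ((A + INR j * h) - h / 2) by lra.
      rewrite cos_plus, cos_minus. ring.
Qed.

Definition cm (m : nat) (L : list (nat * R * R)) : R :=
  fold_right Rplus 0 (map (fun e => if Nat.eqb (fst (fst e)) m then snd (fst e) else 0) L).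

Lemma dsum_tterm e m k : (1 <= m)%nat -> (fst (fst e) < 2 * m)%nat ->
  ls (seq 1 m) (fun j => tterm e (phi m k j)) =
  INR m * (if Nat.eqb (fst (fst e)) 0 then snd (fst e) else 0) +
  INR m * (-1) ^ k * (if Nat.eqb (fst (fst e)) m then snd (fst e) else 0).
Proof.
  intros Hm. destruct e as [[n a] b]. simpl fst; simpl snd. intros Hn. unfold tterm.
  rewrite ls_plus, !ls_scal.
  destruct (Nat.eqb_spec n 0) as [->|H0].
  - destruct (Nat.eqb_spec 0 m) as [E|_]; [lia|].
    rewrite (ls_ext _ _ (fun _ => 1)), (ls_ext _ (fun j => sin _) (fun _ => 0)).
    + rewrite ls_zero, ls_const, length_seq. ring.
    + intros; simpl; rewrite Rmult_0_l; apply sin_0.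
    + intros; simpl; rewrite Rmult_0_l; apply cos_0.
  - destruct (Nat.eqb_spec n m) as [->|Hnm].
    + rewrite (ls_ext _ _ (fun _ => (-1) ^ k)), (ls_ext _ (fun j => sin _) (fun _ => 0)).
      * rewrite ls_zero, ls_const, length_seq. ring.
      * intros j _. rewrite mphi by lia. rewrite sin_period. apply sin_kPI.
      * intros j _. rewrite mphi by lia. rewrite cos_period. apply cos_kPI.
    + destruct (dsum_gen n m k) as [E1 E2]; try lia. rewrite E1, E2. ring.
Qed.

Lemma dsum_tev L m k : (1 <= m)%nat -> (forall e, In e L -> (fst (fst e) < 2 * m)%nat) ->
  ls (seq 1 m) (fun j => tev L (phi m k j)) = INR m * c0 L + INR m * (-1) ^ k * cm m L.
Proof.
  intros Hm. induction L as [|e L IH]; intros HL.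
  - unfold tev, c0, cm; simpl. rewrite ls_zero. ring.
  - rewrite (ls_ext _ _ (fun j => tterm e (phi m k j) + tev L (phi m k j))) by (intros; reflexivity).
    rewrite ls_plus, IH, dsum_tterm; auto.
    + unfold c0, cm; simpl. ring.
    + apply HL; left; auto.
    + intros; apply HL; right; auto.
Qed.


Definition Lmon (a b : nat) : list (nat * R * R) :=
  Nat.iter a (flat_map mcos) (Nat.iter b (flat_map msin) [(0%nat, 1, 0)]).

Lemma tev_Lmon a b x : tev (Lmon a b) x = cos x ^ a * sin x ^ b.
Proof.
  unfold Lmon. induction a as [|a IH]; simpl Nat.iter.
  - induction b as [|b IHb]; simpl Nat.iter.
    + unfold tev, tterm; simpl. rewrite Rmult_0_l, cos_0, sin_0. ring.
    + rewrite tev_msin, IHb. simpl. ring.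
  - rewrite tev_mcos, IH. simpl. ring.
Qed.

Definition freq_ok (d : nat) (L : list (nat * R * R)) : Prop :=
  forall e, In e L -> exists q, d = (fst (fst e) + 2 * q)%nat.

Lemma freq_mcos d L : freq_ok d L -> freq_ok (S d) (flat_map mcos L).
Proof.
  intros H e He. apply in_flat_map in He. destruct He as [[[n a] b] [Hin He]].
  destruct (H _ Hin) as [q Hq]. simpl in Hq.
  destruct n as [|n]; simpl in He.
  - destruct He as [<-|[]]. simpl. exists q; lia.
  - destruct He as [<-|[<-|[]]]; simpl; [exists q|exists (S q)]; lia.
Qed.

Lemma freq_msin d L : freq_ok d L -> freq_ok (S d) (flat_map msin L).
Proof.
  intros H e He. apply in_flat_map in He. destruct He as [[[n a] b] [Hin He]].
  destruct (H _ Hin) as [q Hq]. simpl in Hq.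
  destruct n as [|n]; simpl in He.
  - destruct He as [<-|[]]. simpl. exists q; lia.
  - destruct He as [<-|[<-|[]]]; simpl; [exists q|exists (S q)]; lia.
Qed.

Lemma freq_Lmon a b : freq_ok (a + b) (Lmon a b).
Proof.
  unfold Lmon. induction a as [|a IH]; simpl Nat.iter.
  - induction b as [|b IHb]; simpl Nat.iter.
    + intros e [<-|[]]. simpl. exists 0%nat; auto.
    + apply freq_msin. exact IHb.
  - apply freq_mcos. exact IH.
Qed.

Lemma cm_zero m L : (forall e, In e L -> fst (fst e) <> m) -> cm m L = 0.
Proof.
  induction L as [|e L IH]; intros H; unfold cm in *; simpl; auto.
  rewrite IH by (intros; apply H; right; auto).
  destruct (Nat.eqb_spec (fst (fst e)) m); [exfalso; apply (H e); auto; left; auto|ring].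
Qed.


Fixpoint isP (d : nat) (P : R -> R) : Prop :=
  match d with
  | O => exists c, forall x, P x = c
  | S d' => exists c Q, isP d' Q /\ forall x, P x = c + x * Q x
  end.

Lemma isP_ext d P P' : (forall x, P x = P' x) -> isP d P -> isP d P'.
Proof.
  destruct d; simpl; intros E.
  - intros [c H]; exists c; intros; rewrite <- E; auto.
  - intros [c [Q [HQ H]]]; exists c, Q; split; auto; intros; rewrite <- E; auto.
Qed.

Lemma isP_const d c : isP d (fun _ => c).
Proof.
  revert c; induction d; intros c; simpl. exists c; auto. exists c, (fun _ => 0). split; auto. intros x; simpl; ring.
Qed.

Lemma isP_plus d P Q : isP d P -> isP d Q -> isP d (fun x => P x + Q x).
Proof.
  revert P Q; induction d; simpl; intros P Q.
  - intros [c H] [c' H']. exists (c + c'). intros; rewrite H, H'; auto.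
  - intros [c [P1 [H1 E1]]] [c' [Q1 [H2 E2]]]. exists (c + c'), (fun x => P1 x + Q1 x).
    split; auto. intros; rewrite E1, E2; ring.
Qed.

Lemma isP_scal d a P : isP d P -> isP d (fun x => a * P x).
Proof.
  revert P; induction d; simpl; intros P.
  - intros [c H]. exists (a * c). intros; rewrite H; auto.
  - intros [c [P1 [H1 E1]]]. exists (a * c), (fun x => a * P1 x).
    split; auto. intros; rewrite E1; ring.
Qed.

Lemma isP_S d P : isP d P -> isP (S d) P.
Proof.
  revert P; induction d; intros P.
  - intros [c H]. exists c, (fun _ => 0). split. exists 0; auto. intros; rewrite H; ring.
  - intros [c [P1 [H1 E1]]]. exists c, P1. split; auto.
Qed.

Lemma isP_mono d d' P : (d <= d')%nat -> isP d P -> isP d' P.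
Proof. induction 1; auto. intros; apply isP_S; auto. Qed.

Lemma isP_lin d a Q : isP d Q -> isP (S d) (fun x => (x - a) * Q x).
Proof.
  destruct d; intros HQ.
  - destruct HQ as [c H]. exists (- a * c), (fun _ => c). split. exists c; auto.
    intros; rewrite H; ring.
  - destruct HQ as [c [Q1 [H1 E1]]]. exists (- a * c), (fun x => Q x + (- a) * Q1 x).
    split.
    + apply isP_plus. exists c, Q1; auto. apply isP_scal, isP_S, H1.
    + intros x. rewrite E1. ring.
Qed.

Lemma isP_pow i : isP i (fun x => x ^ i).
Proof. induction i. exists 1; auto. exists 0, (fun x => x ^ i). split; auto. intros; simpl; ring. Qed.

Lemma isP_factor d : forall P, isP (S d) P -> forall y, exists Q, isP d Q /\ forall x, P x - P y = (x - y) * Q x.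
Proof.
  induction d; intros P [c [Q0 [H0 E0]]] y.
  - destruct H0 as [q Hq]. exists Q0. split. exists q; auto.
    intros x. rewrite !E0, !Hq. ring.
  - destruct (IHd Q0 H0 y) as [R1 [HR ER]].
    exists (fun x => Q0 x + y * R1 x). split.
    + apply isP_plus; auto. apply isP_scal, isP_S, HR.
    + intros x. rewrite !E0. replace (c + x * Q0 x - (c + y * Q0 y)) with ((x - y) * Q0 x + y * (Q0 x - Q0 y)) by ring.
      rewrite ER. ring.
Qed.

Lemma isP_roots d : forall P ys, isP d P -> length ys = S d -> NoDup ys ->
  (forall y, In y ys -> P y = 0) -> forall x, P x = 0.
Proof.
  induction d; intros P ys HP Hl Hn Hr x.
  - destruct ys as [|y ys]; [discriminate|]. destruct HP as [c Hc].
    rewrite Hc, <- (Hc y). apply Hr; left; auto.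
  - destruct ys as [|y0 ys]; [discriminate|].
    destruct (isP_factor d P HP y0) as [Q [HQ EQ]].
    inversion Hn; subst.
    assert (HQ0 : forall x, Q x = 0).
    { apply (IHd Q ys HQ); auto. intros y Hy.
      assert (E := EQ y). rewrite (Hr y (or_intror Hy)), (Hr y0 (or_introl eq_refl)) in E.
      assert (y - y0 <> 0) by (intro; apply H1; replace y0 with y by lra; auto).
      apply Rmult_eq_reg_l with (y - y0); auto. lra. }
    assert (E := EQ x). rewrite HQ0, (Hr y0 (or_introl eq_refl)) in E. lra.
Qed.

Definition prodl (F : list nat) (f : nat -> R) : R := fold_right Rmult 1 (map f F).

Lemma isP_prod F (u v : nat -> R) : isP (length F) (fun x => prodl F (fun l => (x - u l) / v l)).
Proof.
  induction F as [|l F IH].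
  - exists 1; auto.
  - apply (isP_ext (S (length F)) (fun x => / v l * ((x - u l) * prodl F (fun l => (x - u l) / v l)))).
    + intros x; unfold prodl; simpl; unfold Rdiv; ring.
    + apply isP_scal, isP_lin, IH.
Qed.

Lemma length_filter_lt k L : In k L -> (length (filter (fun l => negb (Nat.eqb l k)) L) < length L)%nat.
Proof.
  induction L as [|a L IH]; simpl; [tauto|]. intros [<-|H].
  - rewrite Nat.eqb_refl. simpl. pose proof (filter_length_le (fun l => negb (l =? a)) L). lia.
  - destruct (negb (a =? k)); simpl; specialize (IH H); lia.
Qed.

Lemma isP_ls d L (F : nat -> R -> R) : (forall k, In k L -> isP d (F k)) -> isP d (fun x => ls L (fun k => F k x)).
Proof.
  induction L as [|a L IH]; intros H; unfold ls; simpl.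
  - apply isP_const.
  - apply isP_plus. apply H; left; auto. apply IH. intros; apply H; right; auto.
Qed.

Lemma ls_single L F j : NoDup L -> In j L -> (forall k, In k L -> k <> j -> F k = 0) -> ls L F = F j.
Proof.
  induction L as [|a L IH]; intros Hn Hj H; [destruct Hj|]. inversion Hn; subst. change (ls (a :: L) F) with (F a + ls L F).
  destruct Hj as [<-|Hj].
  - rewrite (ls_ext L F (fun _ => 0)), ls_zero; [ring|].
    intros k Hk; apply H; [right; auto|intro; subst; auto].
  - rewrite H by (first [left; reflexivity | intro; subst; auto]). rewrite IH; auto. ring.
    intros; apply H; auto; right; auto.
Qed.

Lemma prodl_zero F f l : In l F -> f l = 0 -> prodl F f = 0.
Proof. induction F; simpl; [tauto|]. unfold prodl in *; simpl. intros [<-|H] E.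
  rewrite E; ring. rewrite IHF; auto; ring. Qed.

Lemma prodl_one F f : (forall l, In l F -> f l = 1) -> prodl F f = 1.
Proof. induction F; unfold prodl in *; simpl; auto. intros H. rewrite H, IHF; auto. ring. Qed.

Lemma NoDup_map_inj (y : nat -> R) L : NoDup L -> (forall k l, In k L -> In l L -> k <> l -> y k <> y l) -> NoDup (map y L).
Proof.
  induction L as [|a L IH]; simpl; intros Hn H; constructor; inversion Hn; subst.
  - intros Hin. apply in_map_iff in Hin. destruct Hin as [l [E Hl]].
    apply (H l a); auto. intro; subst; auto.
  - apply IH; auto.
Qed.

Lemma lagrange (L : list nat) (y : nat -> R) (x : R) i :
  NoDup L -> (forall k l, In k L -> In l L -> k <> l -> y k <> y l) -> (i < length L)%nat ->
  ls L (fun k => y k ^ i * prodl (filter (fun l => negb (Nat.eqb l k)) L) (fun l => (x - y l) / (y k - y l))) = x ^ i.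
Proof.
  intros Hn Hy Hi.
  set (P := fun x => ls L (fun k => y k ^ i * prodl (filter (fun l => negb (Nat.eqb l k)) L) (fun l => (x - y l) / (y k - y l))) - x ^ i).
  assert (HP : isP (length L - 1) P).
  { apply isP_plus.
    - apply isP_ls. intros k Hk. apply isP_scal.
      apply (isP_mono (length (filter (fun l => negb (Nat.eqb l k)) L))).
      pose proof (length_filter_lt k L Hk); lia. apply isP_prod.
    - apply (isP_ext _ (fun x => -1 * x ^ i)). intros; ring.
      apply isP_scal. apply (isP_mono i); [lia|apply isP_pow]. }
  assert (E := isP_roots _ P (map y L) HP). 
  enough (P x = 0) by (unfold P in *; lra).
  apply E.
  - rewrite length_map. lia.
  - apply NoDup_map_inj; auto.
  - intros z Hz. apply in_map_iff in Hz. destruct Hz as [j [<- Hj]]. unfold P.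
    rewrite (ls_single _ _ j); auto.
    + rewrite prodl_one. ring. intros l Hl. apply filter_In in Hl. destruct Hl as [Hl Hlj].
      apply Bool.negb_true_iff, Nat.eqb_neq in Hlj. field. intro. apply (Hy j l); auto. lra.
    + intros k Hk Hkj. rewrite (prodl_zero _ _ j). ring.
      apply filter_In. split; auto. apply Bool.negb_true_iff, Nat.eqb_neq; auto.
      unfold Rminus; rewrite Rplus_opp_r. unfold Rdiv; ring.
Qed.


Lemma bpt_phi r m k j : bpt r m k j = (r k * cos (phi m k j), r k * sin (phi m k j)).
Proof. reflexivity. Qed.

Lemma sc1 x : sin x ^ 2 + cos x ^ 2 = 1.
Proof. rewrite <- (sin2_cos2 x). unfold Rsqr; ring. Qed.

Lemma norm2_bpt r m k j : 0 < r k -> norm2 (bpt r m k j) = r k.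
Proof.
  intros H. rewrite bpt_phi. unfold norm2; simpl fst; simpl snd.
  replace ((r k * cos (phi m k j)) ^ 2 + (r k * sin (phi m k j)) ^ 2) with (r k ^ 2 * (sin (phi m k j) ^ 2 + cos (phi m k j) ^ 2)) by ring.
  rewrite sc1, Rmult_1_r. apply sqrt_pow2. lra.
Qed.

Lemma phi_diff m k j j' : (1 <= m)%nat -> phi m k j' - phi m k j = 2 * PI * (INR j' - INR j) / INR m.
Proof. intros Hm. unfold phi. rewrite !plus_INR, !mult_INR. replace (INR 2) with 2 by (simpl; ring).
  field. apply not_0_INR; lia. Qed.

Lemma bpt_inj_j r m k j j' : (1 <= m)%nat -> 0 < r k -> (1 <= j <= m)%nat -> (1 <= j' <= m)%nat ->
  bpt r m k j = bpt r m k j' -> j = j'.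
Proof.
  intros Hm Hr Hj Hj' E. rewrite !bpt_phi in E. injection E as E1 E2.
  apply Rmult_eq_reg_l in E1; [|lra]. apply Rmult_eq_reg_l in E2; [|lra].
  assert (key : forall a b, (1 <= a <= m)%nat -> (1 <= b <= m)%nat -> (a < b)%nat ->
     cos (phi m k a) = cos (phi m k b) -> sin (phi m k a) = sin (phi m k b) -> False).
  { intros a b Ha Hb Hab Ec Es.
    set (d := phi m k b - phi m k a).
    assert (Hsd : sin d = 0) by (unfold d; rewrite sin_minus, Ec, Es; ring).
    assert (Hcd : cos d = 1) by (unfold d; rewrite cos_minus, Ec, Es; pose proof (sc1 (phi m k b)); lra).
    assert (Hd : d = 2 * PI * (INR b - INR a) / INR m) by (unfold d; apply phi_diff; auto).
    assert (HmR : 0 < INR m) by (apply lt_0_INR; lia).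
    apply lt_INR in Hab. assert (Hbm : INR b - INR a < INR m) by (assert (INR b <= INR m) by (apply le_INR; lia); assert (1 <= INR a) by (apply (le_INR 1); lia); lra).
    pose proof PI_RGT_0.
    assert (Hd0 : 0 < d) by (rewrite Hd; apply Rdiv_lt_0_compat; nra).
    assert (Hd2 : d < 2 * PI) by (rewrite Hd; apply Rmult_lt_reg_r with (INR m); auto; unfold Rdiv; rewrite Rmult_assoc, Rinv_l by lra; nra).
    destruct (Rtotal_order d PI) as [Hl|[He|Hg]].
    - pose proof (sin_gt_0 d Hd0 Hl). lra.
    - rewrite He, cos_PI in Hcd. lra.
    - pose proof (sin_lt_0 d Hg Hd2). lra. }
  destruct (Nat.lt_total j j') as [H|[H|H]]; auto; exfalso.
  - apply (key j j'); auto.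
  - apply (key j' j); auto.
Qed.

Lemma r_inj p (r : nat -> R) k l :
  (forall k l, (1 <= k)%nat -> (k < l)%nat -> (l <= p)%nat -> r k < r l) ->
  (1 <= k <= p)%nat -> (1 <= l <= p)%nat -> r k = r l -> k = l.
Proof.
  intros Hmon Hk Hl E. destruct (Nat.lt_total k l) as [H|[H|H]]; auto.
  - specialize (Hmon k l ltac:(lia) H ltac:(lia)). lra.
  - specialize (Hmon l k ltac:(lia) H ltac:(lia)). lra.
Qed.

Lemma in_B r p m x : In x (Bset r p m) <-> exists k j, (1 <= k <= p)%nat /\ (1 <= j <= m)%nat /\ x = bpt r m k j.
Proof.
  unfold Bset. rewrite in_flat_map. split.
  - intros [k [Hk Hx]]. apply in_map_iff in Hx. destruct Hx as [j [<- Hj]].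
    apply in_seq in Hk, Hj. exists k, j. repeat split; lia.
  - intros [k [j [Hk [Hj ->]]]]. exists k. split. apply in_seq; lia.
    apply in_map_iff. exists j. split; auto. apply in_seq; lia.
Qed.

Lemma NoDup_B r p m : (1 <= m)%nat ->
  (forall k, (1 <= k <= p)%nat -> 0 < r k) ->
  (forall k l, (1 <= k)%nat -> (k < l)%nat -> (l <= p)%nat -> r k < r l) ->
  NoDup (Bset r p m).
Proof.
  intros Hm Hr Hmon. unfold Bset.
  assert (G : forall s n, (1 <= s)%nat -> (s + n <= S p)%nat ->
     NoDup (flat_map (fun k => map (fun j => bpt r m k j) (seq 1 m)) (seq s n))).
  { intros s n; revert s; induction n; intros s Hs Hsn; simpl. constructor.
    apply NoDup_app.
    - apply FinFun.Injective_map_NoDup_in; [|apply seq_NoDup].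
      intros a b Ha Hb E. apply in_seq in Ha, Hb. apply (bpt_inj_j r m s); auto; try lia.
      apply Hr; lia.
    - apply IHn; lia.
    - intros x Hx Hx'. apply in_map_iff in Hx. destruct Hx as [j [<- Hj]].
      apply in_flat_map in Hx'. destruct Hx' as [k [Hk Hx']]. apply in_map_iff in Hx'.
      destruct Hx' as [j' [E Hj']]. apply in_seq in Hk.
      assert (E2 := f_equal norm2 E). rewrite !norm2_bpt in E2 by (apply Hr; lia).
      apply (r_inj p r k s) in E2; auto; lia. }
  apply G; lia.
Qed.


Lemma prodl_app F1 F2 f : prodl (F1 ++ F2) f = prodl F1 f * prodl F2 f.
Proof. unfold prodl. rewrite map_app, fold_right_app. induction F1; simpl; [ring|rewrite IHF1; ring]. Qed.
Lemma prodl_pos F f : (forall l, In l F -> 0 < f l) -> 0 < prodl F f.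
Proof. induction F; unfold prodl in *; simpl; intros H; [lra|]. apply Rmult_lt_0_compat; auto. Qed.
Lemma prodl_neg F f : (forall l, In l F -> f l < 0) -> 0 < (-1) ^ (length F) * prodl F f.
Proof. induction F; unfold prodl in *; simpl; intros H; [lra|].
  specialize (IHF (fun l Hl => H l (or_intror Hl))). specialize (H a (or_introl eq_refl)).
  replace (-1 * (-1) ^ length F * (f a * fold_right Rmult 1 (map f F))) with ((-1) ^ length F * fold_right Rmult 1 (map f F) * (- f a)) by ring.
  apply Rmult_lt_0_compat; lra. Qed.

Lemma filter_all {A} (f : A -> bool) l : (forall x, In x l -> f x = true) -> filter f l = l.
Proof. induction l; simpl; auto. intros H. rewrite H by auto. rewrite IHl; auto. Qed.

Lemma sq_lt a b : 0 < a -> a < b -> a ^ 2 < b ^ 2.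
Proof. intros; nra. Qed.

Lemma weight_pos (r : nat -> R) p m k :
  (forall k, (1 <= k <= p)%nat -> 0 < r k) ->
  (forall k l, (1 <= k)%nat -> (k < l)%nat -> (l <= p)%nat -> r k < r l) ->
  (1 <= k <= p)%nat -> 0 < weight_formula r p m k.
Proof.
  intros Hr Hmon Hk. unfold weight_formula.
  destruct (Nat.eqb_spec k 1) as [->|Hk1].
  - apply Rinv_0_lt_compat, pow_lt, Hr; lia.
  - fold (prodl (filter (fun l => negb (Nat.eqb l k)) (seq 2 (p - 1))) (fun l => (r 1%nat ^ 2 - r l ^ 2) / (r k ^ 2 - r l ^ 2))).
    replace (seq 2 (p - 1)) with (seq 2 (k - 2) ++ k :: seq (S k) (p - k)).
    2:{ replace (p - 1)%nat with ((k - 2) + S (p - k))%nat by lia. rewrite seq_app.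
        replace (2 + (k - 2))%nat with k by lia. reflexivity. }
    rewrite filter_app. simpl filter. rewrite Nat.eqb_refl. simpl negb. cbv iota.
    rewrite !filter_all.
    2:{ intros x Hx; apply in_seq in Hx. apply Bool.negb_true_iff, Nat.eqb_neq; lia. }
    2:{ intros x Hx; apply in_seq in Hx. apply Bool.negb_true_iff, Nat.eqb_neq; lia. }
    rewrite prodl_app.
    assert (Hrk : 0 < r k) by (apply Hr; lia). assert (Hr1 : 0 < r 1%nat) by (apply Hr; lia).
    pose proof (prodl_neg (seq 2 (k - 2)) (fun l => (r 1%nat ^ 2 - r l ^ 2) / (r k ^ 2 - r l ^ 2))) as N1.
    rewrite length_seq in N1.
    assert (P1 : 0 < (-1) ^ (k - 2) * prodl (seq 2 (k - 2)) (fun l => (r 1%nat ^ 2 - r l ^ 2) / (r k ^ 2 - r l ^ 2))).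
    { apply N1. intros l Hl; apply in_seq in Hl.
      assert (Hrl : 0 < r l) by (apply Hr; lia).
      pose proof (sq_lt _ _ Hr1 (Hmon 1%nat l ltac:(lia) ltac:(lia) ltac:(lia))).
      pose proof (sq_lt _ _ Hrl (Hmon l k ltac:(lia) ltac:(lia) ltac:(lia))).
      unfold Rdiv. apply Rmult_neg_pos. lra. apply Rinv_0_lt_compat; lra. }
    assert (P2 : 0 < prodl (seq (S k) (p - k)) (fun l => (r 1%nat ^ 2 - r l ^ 2) / (r k ^ 2 - r l ^ 2))).
    { apply prodl_pos. intros l Hl; apply in_seq in Hl.
      pose proof (sq_lt _ _ Hr1 (Hmon 1%nat l ltac:(lia) ltac:(lia) ltac:(lia))).
      pose proof (sq_lt _ _ Hrk (Hmon k l ltac:(lia) ltac:(lia) ltac:(lia))).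
      unfold Rdiv. replace ((r 1%nat ^ 2 - r l ^ 2) * / (r k ^ 2 - r l ^ 2)) with ((r l ^ 2 - r 1%nat ^ 2) * / (r l ^ 2 - r k ^ 2)) by (field; lra).
      apply Rmult_lt_0_compat. lra. apply Rinv_0_lt_compat; lra. }
    replace ((-1) ^ k) with ((-1) ^ (k - 2)) by (replace k with ((k - 2) + 2)%nat at 2 by lia; rewrite pow_add; simpl; ring).
    assert (0 < / r k ^ m) by (apply Rinv_0_lt_compat, pow_lt; lra).
    replace ((-1) ^ (k - 2) * / r k ^ m * (prodl (seq 2 (k - 2)) (fun l => (r 1%nat ^ 2 - r l ^ 2) / (r k ^ 2 - r l ^ 2)) *
      prodl (seq (S k) (p - k)) (fun l => (r 1%nat ^ 2 - r l ^ 2) / (r k ^ 2 - r l ^ 2))))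
    with (/ r k ^ m * ((-1) ^ (k - 2) * prodl (seq 2 (k - 2)) (fun l => (r 1%nat ^ 2 - r l ^ 2) / (r k ^ 2 - r l ^ 2))) *
      prodl (seq (S k) (p - k)) (fun l => (r 1%nat ^ 2 - r l ^ 2) / (r k ^ 2 - r l ^ 2))) by ring.
    apply Rmult_lt_0_compat; auto. apply Rmult_lt_0_compat; auto.
Qed.

Definition wdef (r : nat -> R) p m (x : pt) : R :=
  ls (seq 1 p) (fun k => if Req_EM_T (norm2 x) (r k) then weight_formula r p m k else 0).

Lemma wdef_ok (r : nat -> R) p m k j :
  (forall k, (1 <= k <= p)%nat -> 0 < r k) ->
  (forall k l, (1 <= k)%nat -> (k < l)%nat -> (l <= p)%nat -> r k < r l) ->
  (1 <= k <= p)%nat -> wdef r p m (bpt r m k j) = weight_formula r p m k.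
Proof.
  intros Hr Hmon Hk. unfold wdef. rewrite norm2_bpt by (apply Hr; lia).
  rewrite (ls_single _ _ k).
  - destruct (Req_EM_T (r k) (r k)); tauto.
  - apply seq_NoDup.
  - apply in_seq; lia.
  - intros k' Hk' Hne. apply in_seq in Hk'. destruct (Req_EM_T (r k) (r k')) as [E|]; auto.
    exfalso. apply Hne. symmetry. apply (r_inj p r k k'); auto; lia.
Qed.

Lemma spectrum_B (r : nat -> R) p m s : (1 <= m)%nat ->
  (forall k, (1 <= k <= p)%nat -> 0 < r k) ->
  In s (norm_spectrum (Bset r p m)) <-> exists k, (1 <= k <= p)%nat /\ s = r k.
Proof.
  intros Hm Hr. unfold norm_spectrum. rewrite nodup_In, in_map_iff. split.
  - intros [x [<- Hx]]. apply in_B in Hx. destruct Hx as [k [j [Hk [Hj ->]]]].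
    exists k. split; auto. apply norm2_bpt, Hr; auto.
  - intros [k [Hk ->]]. exists (bpt r m k 1%nat). split. apply norm2_bpt, Hr; auto.
    apply in_B. exists k, 1%nat. repeat split; auto; lia.
Qed.

Lemma length_B (r : nat -> R) p m : length (Bset r p m) = (p * m)%nat.
Proof.
  unfold Bset. assert (G : forall s, length (flat_map (fun k => map (fun j => bpt r m k j) (seq 1 m)) (seq s p)) = (p * m)%nat).
  { induction p; intros s; simpl; auto. rewrite length_app, length_map, length_seq, IHp. reflexivity. }
  apply G.
Qed.

Lemma binom1 n : binom n 1 = n.
Proof. induction n; simpl; auto. destruct n; simpl in *; lia. Qed.

Lemma dZ2 s : (-1 <= s)%Z -> Z.of_nat (dZ 2 s) = (s + 1)%Z.
Proof.
  intros H. unfold dZ. destruct (Z.ltb_spec s 0).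
  - simpl. lia.
  - replace (2 - 1)%nat with 1%nat by reflexivity. rewrite binom1. lia.
Qed.

Lemma fold_add_app l1 l2 : fold_right Nat.add 0%nat (l1 ++ l2) = (fold_right Nat.add 0 l1 + fold_right Nat.add 0 l2)%nat.
Proof. induction l1; simpl; lia. Qed.

Lemma N_count t p : (4 * p <= t + 5)%nat -> N_npt 2 p t = (p * (t + 3 - 2 * p))%nat.
Proof.
  intros Hp. apply Nat2Z.inj.
  assert (Hk : forall k, (1 <= k <= p)%nat -> Z.of_nat (N_k 2 t k) = (Z.of_nat t + 5 - 4 * Z.of_nat k)%Z).
  { intros k Hk. unfold N_k. rewrite Nat2Z.inj_add.
    pose proof (Z.div_mod (Z.of_nat t - 1) 2 ltac:(lia)). pose proof (Z.mod_pos_bound (Z.of_nat t - 1) 2 ltac:(lia)).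
    pose proof (Z.div_mod (Z.of_nat t) 2 ltac:(lia)). pose proof (Z.mod_pos_bound (Z.of_nat t) 2 ltac:(lia)).
    rewrite !dZ2; lia. }
  assert (G : forall q, (q <= p)%nat -> Z.of_nat (N_npt 2 q t) = (Z.of_nat q * (Z.of_nat t + 5) - 2 * Z.of_nat q * (Z.of_nat q + 1))%Z).
  { induction q; intros Hq. reflexivity.
    unfold N_npt in *. rewrite seq_S, map_app, fold_add_app, Nat2Z.inj_add, IHq by lia.
    change (fold_right Nat.add 0%nat (map (N_k 2 t) [(1 + q)%nat])) with (N_k 2 t (1 + q) + 0)%nat.
    rewrite Nat.add_0_r, Hk by lia. rewrite !Nat2Z.inj_succ. nia. }
  rewrite G by lia. rewrite Nat2Z.inj_mul, Nat2Z.inj_sub by lia. nia.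
Qed.

Lemma antipodal_B (r : nat -> R) p m h (w : pt -> R) : m = (2 * h)%nat -> (1 <= h)%nat ->
  (forall k j, (1 <= k <= p)%nat -> (1 <= j <= m)%nat -> w (bpt r m k j) = weight_formula r p m k) ->
  antipodal (Bset r p m) w.
Proof.
  intros Hmh Hh hw x Hx. apply in_B in Hx. destruct Hx as [k [j [Hk [Hj ->]]]].
  assert (HmR : INR m = 2 * INR h) by (rewrite Hmh, mult_INR; simpl; ring).
  assert (HhR : 0 < INR h) by (apply lt_0_INR; lia).
  destruct (Nat.le_gt_cases j h) as [Hjh|Hjh].
  - assert (E : bpt r m k (j + h) = (- fst (bpt r m k j), - snd (bpt r m k j))).
    { rewrite !bpt_phi. simpl fst; simpl snd.
      replace (phi m k (j + h)) with (phi m k j + PI).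
      rewrite neg_cos, neg_sin. f_equal; ring.
      unfold phi. rewrite !plus_INR, !mult_INR, ?plus_INR, HmR. replace (INR 2) with 2 by (simpl; ring). field. lra. }
    rewrite <- E. split.
    + apply in_B. exists k, (j + h)%nat. repeat split; auto; lia.
    + rewrite !hw; auto; lia.
  - assert (E : bpt r m k (j - h) = (- fst (bpt r m k j), - snd (bpt r m k j))).
    { rewrite !bpt_phi. simpl fst; simpl snd.
      replace (phi m k j) with (phi m k (j - h) + PI).
      rewrite neg_cos, neg_sin. f_equal; ring.
      unfold phi. rewrite !plus_INR, !mult_INR, minus_INR by lia. rewrite ?plus_INR, HmR. replace (INR 2) with 2 by (simpl; ring). field. lra. }
    rewrite <- E. split.
    + apply in_B. exists k, (j - h)%nat. repeat split; auto; lia.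
    + rewrite !hw; auto; lia.
Qed.


Definition DS (t : nat) (F : nat -> nat -> R) : R :=
  sum_f_R0 (fun a => sum_f_R0 (fun b => F a b) (t - a)) t.

Lemma DS_ext t F G : (forall a b, (a + b <= t)%nat -> F a b = G a b) -> DS t F = DS t G.
Proof. intros H. unfold DS. apply sum_eq. intros a Ha. apply sum_eq. intros b Hb. apply H. lia. Qed.

Lemma sum_scal_l x F N : x * sum_f_R0 F N = sum_f_R0 (fun i => x * F i) N.
Proof. rewrite scal_sum. apply sum_eq. intros; ring. Qed.

Lemma DS_scal t x F : x * DS t F = DS t (fun a b => x * F a b).
Proof. unfold DS. rewrite sum_scal_l. apply sum_eq. intros. apply sum_scal_l. Qed.

Lemma DS_plus t F G : DS t (fun a b => F a b + G a b) = DS t F + DS t G.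
Proof. unfold DS. rewrite <- sum_plus. apply sum_eq. intros. apply sum_plus. Qed.

Lemma sum_zero F N : (forall i, (i <= N)%nat -> F i = 0) -> sum_f_R0 F N = 0.
Proof. induction N; intros H; simpl. apply H; lia. rewrite IHN, H; auto; ring. Qed.

Lemma DS_zero t F : (forall a b, (a + b <= t)%nat -> F a b = 0) -> DS t F = 0.
Proof. intros H. unfold DS. apply sum_zero. intros a Ha. apply sum_zero. intros b Hb. apply H. lia. Qed.

Lemma ls_sum l (G : nat -> nat -> R) N : ls l (fun j => sum_f_R0 (fun a => G j a) N) = sum_f_R0 (fun a => ls l (fun j => G j a)) N.
Proof.
  induction N; simpl. reflexivity.
  rewrite ls_plus, IHN. reflexivity.
Qed.

Lemma ls_DS l t (F : nat -> nat -> nat -> R) : ls l (fun j => DS t (F j)) = DS t (fun a b => ls l (fun j => F j a b)).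
Proof. unfold DS. rewrite ls_sum. apply sum_eq. intros. apply ls_sum. Qed.

Lemma is_RInt_sum (F : nat -> R -> R) v N : (forall a, (a <= N)%nat -> is_RInt (F a) 0 (2 * PI) (v a)) ->
  is_RInt (fun x => sum_f_R0 (fun a => F a x) N) 0 (2 * PI) (sum_f_R0 v N).
Proof.
  induction N; intros H; simpl.
  - apply H; lia.
  - eapply is_RInt_extR. 2: apply (is_RInt_plus _ _ _ _ _ _ (IHN (fun a Ha => H a ltac:(lia))) (H (S N) ltac:(lia))).
    intros; reflexivity.
Qed.

Lemma is_RInt_DS t (F : nat -> nat -> R -> R) v : (forall a b, (a + b <= t)%nat -> is_RInt (F a b) 0 (2 * PI) (v a b)) ->
  is_RInt (fun x => DS t (fun a b => F a b x)) 0 (2 * PI) (DS t v).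
Proof.
  intros H. unfold DS. apply is_RInt_sum. intros a Ha. apply (is_RInt_sum (fun b => F a b)). intros b Hb. apply H; lia.
Qed.

Lemma mono_polar (c R0 x : R) a b : c * (R0 * cos x) ^ a * (R0 * sin x) ^ b = c * R0 ^ (a + b) * tev (Lmon a b) x.
Proof. rewrite tev_Lmon, !Rpow_mult_distr, pow_add. ring. Qed.

Lemma avg_poly t (c : nat -> nat -> R) f R0 :
  (forall x y, f (x, y) = DS t (fun a b => c a b * x ^ a * y ^ b)) ->
  circle_avg R0 f = DS t (fun a b => c a b * R0 ^ (a + b) * c0 (Lmon a b)).
Proof.
  intros Hf. unfold circle_avg.
  assert (HI : is_RInt (fun th => f (R0 * cos th, R0 * sin th)) 0 (2 * PI) (DS t (fun a b => c a b * R0 ^ (a + b) * (2 * PI * c0 (Lmon a b))))).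
  { eapply is_RInt_extR. intros x. symmetry. rewrite Hf. reflexivity.
    apply (is_RInt_DS t (fun a b x => c a b * (R0 * cos x) ^ a * (R0 * sin x) ^ b)).
    intros a b _. eapply is_RInt_extR. intros x. symmetry. apply mono_polar.
    apply (is_RInt_scal (tev (Lmon a b)) 0 (2 * PI) (c a b * R0 ^ (a + b))). apply is_RInt_tev. }
  rewrite (is_RInt_unique _ _ _ _ HI), DS_scal. apply DS_ext. intros a b _.
  field. apply PI_neq0.
Qed.

Lemma dsum_poly t (c : nat -> nat -> R) f (r : nat -> R) m k :
  (1 <= m)%nat -> (t < 2 * m)%nat ->
  (forall x y, f (x, y) = DS t (fun a b => c a b * x ^ a * y ^ b)) ->
  ls (seq 1 m) (fun j => f (bpt r m k j)) =
  DS t (fun a b => c a b * r k ^ (a + b) * (INR m * c0 (Lmon a b) + INR m * (-1) ^ k * cm m (Lmon a b))).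
Proof.
  intros Hm Ht Hf.
  rewrite (ls_ext _ _ (fun j => DS t (fun a b => c a b * r k ^ (a + b) * tev (Lmon a b) (phi m k j)))).
  - rewrite ls_DS. apply DS_ext. intros a b Hab. rewrite ls_scal, dsum_tev; auto.
    intros e He. destruct (freq_Lmon a b e He) as [q Hq]. lia.
  - intros j _. rewrite bpt_phi, Hf. apply DS_ext. intros a b _. apply mono_polar.
Qed.

Lemma vanish t p (r : nat -> R) a b :
  (1 <= p)%nat -> (4 * p <= t + 5)%nat ->
  (forall k, (1 <= k <= p)%nat -> 0 < r k) ->
  (forall k l, (1 <= k)%nat -> (k < l)%nat -> (l <= p)%nat -> r k < r l) ->
  (a + b <= t)%nat ->
  let m := (t + 3 - 2 * p)%nat in
  cm m (Lmon a b) * ls (seq 1 p) (fun k => weight_formula r p m k * ((-1) ^ k * r k ^ (a + b))) = 0.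
Proof.
  intros Hp Hpt Hr Hmon Hab m.
  destruct (classic (exists e, In e (Lmon a b) /\ fst (fst e) = m)) as [[e [He Em]]|Hno].
  2:{ rewrite cm_zero. ring. intros e He E. apply Hno. exists e; auto. }
  destruct (freq_Lmon a b e He) as [q Hq]. rewrite Em in Hq.
  assert (Hq2 : (2 <= p)%nat /\ (q <= p - 2)%nat) by (unfold m in Hq; lia).
  apply Rmult_eq_0_compat_l.
  replace (seq 1 p) with (1%nat :: seq 2 (p - 1)) by (destruct p; [lia|]; simpl; rewrite Nat.sub_0_r; reflexivity).
  change (ls (1%nat :: seq 2 (p - 1)) ?F) with (F 1%nat + ls (seq 2 (p - 1)) F).
  rewrite Hq.
  assert (Hr1 : 0 < r 1%nat) by (apply Hr; lia).
  rewrite (ls_ext _ _ (fun k => (r k ^ 2) ^ q * prodl (filter (fun l => negb (Nat.eqb l k)) (seq 2 (p - 1)))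
        (fun l => (r 1%nat ^ 2 - r l ^ 2) / (r k ^ 2 - r l ^ 2)))).
  - rewrite lagrange.
    + unfold weight_formula. rewrite Nat.eqb_refl. rewrite pow_add, <- pow_mult.
      field. apply pow_nonzero; lra.
    + apply seq_NoDup.
    + intros k l Hk Hl Hkl E. apply in_seq in Hk, Hl.
      destruct (Nat.lt_total k l) as [H|[H|H]]; [|lia|].
      * pose proof (sq_lt _ _ (Hr k ltac:(lia)) (Hmon k l ltac:(lia) H ltac:(lia))). lra.
      * pose proof (sq_lt _ _ (Hr l ltac:(lia)) (Hmon l k ltac:(lia) H ltac:(lia))). lra.
    + rewrite length_seq. lia.
  - intros k Hk. apply in_seq in Hk. unfold weight_formula.
    destruct (Nat.eqb_spec k 1); [lia|].
    assert (Hrk : 0 < r k) by (apply Hr; lia).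
    fold (prodl (filter (fun l => negb (Nat.eqb l k)) (seq 2 (p - 1))) (fun l => (r 1%nat ^ 2 - r l ^ 2) / (r k ^ 2 - r l ^ 2))).
    set (P := prodl _ _).
    assert (E1 : (-1) ^ k * (-1) ^ k = 1) by (rewrite <- Rpow_mult_distr; replace ((-1) * (-1)) with 1 by ring; apply pow1).
    assert (E2 : r k ^ m * / r k ^ m = 1) by (apply Rinv_r, pow_nonzero; lra).
    rewrite pow_add, pow_mult.
    replace ((-1) ^ k * / r k ^ m * P * ((-1) ^ k * (r k ^ m * (r k ^ 2) ^ q)))
      with (((-1) ^ k * (-1) ^ k) * (r k ^ m * / r k ^ m) * ((r k ^ 2) ^ q * P)) by ring.
    rewrite E1, E2. ring.
Qed.

Lemma sum_perm (g : R -> R) l l' : Permutation l l' -> fold_right Rplus 0 (map g l) = fold_right Rplus 0 (map g l').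
Proof. induction 1; simpl; auto; try ring. rewrite IHPermutation; auto. congruence. Qed.

Lemma fold_Rplus_z l z : fold_right Rplus z l = fold_right Rplus 0 l + z.
Proof. induction l; simpl; [ring|rewrite IHl; ring]. Qed.

Lemma lsum_B (r : nat -> R) p m h : lsum (Bset r p m) h = ls (seq 1 p) (fun k => ls (seq 1 m) (fun j => h (bpt r m k j))).
Proof.
  unfold lsum, Bset. generalize (seq 1 p). intros l. induction l as [|k l IH]; simpl; auto.
  rewrite map_app, fold_right_app, fold_Rplus_z, IH, map_map. reflexivity.
Qed.

Lemma lsum_filter (P : pt -> bool) X h : lsum (filter P X) h = lsum X (fun x => if P x then h x else 0).
Proof. unfold lsum. induction X; simpl; auto. destruct (P a); simpl; rewrite IHX; ring. Qed.

Lemma Wr_B (r : nat -> R) p m w k :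
  (forall k, (1 <= k <= p)%nat -> 0 < r k) ->
  (forall k l, (1 <= k)%nat -> (k < l)%nat -> (l <= p)%nat -> r k < r l) ->
  (forall k j, (1 <= k <= p)%nat -> (1 <= j <= m)%nat -> w (bpt r m k j) = weight_formula r p m k) ->
  (1 <= k <= p)%nat ->
  Wr (Bset r p m) w (r k) = INR m * weight_formula r p m k.
Proof.
  intros Hr Hmon hw Hk. unfold Wr. rewrite lsum_filter, lsum_B.
  rewrite (ls_single _ _ k).
  - rewrite (ls_ext _ _ (fun _ => weight_formula r p m k)).
    + rewrite ls_const, length_seq. reflexivity.
    + intros j Hj. apply in_seq in Hj. rewrite norm2_bpt by (apply Hr; lia).
      destruct (Req_EM_T (r k) (r k)); [|tauto]. apply hw; lia.
  - apply seq_NoDup.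
  - apply in_seq; lia.
  - intros k' Hk' Hne. apply in_seq in Hk'. 
    rewrite (ls_ext _ _ (fun _ => 0)). apply ls_zero.
    intros j _. rewrite norm2_bpt by (apply Hr; lia).
    destruct (Req_EM_T (r k') (r k)) as [E|]; auto. exfalso. apply Hne. apply (r_inj p r k' k); auto; lia.
Qed.

Lemma design_eq t p (r : nat -> R) (w : pt -> R) f :
  (1 <= p)%nat -> (4 * p <= t + 5)%nat ->
  (forall k, (1 <= k <= p)%nat -> 0 < r k) ->
  (forall k l, (1 <= k)%nat -> (k < l)%nat -> (l <= p)%nat -> r k < r l) ->
  let m := (t + 3 - 2 * p)%nat in
  (forall k j, (1 <= k <= p)%nat -> (1 <= j <= m)%nat -> w (bpt r m k j) = weight_formula r p m k) ->
  is_poly_le t f ->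
  fold_right Rplus 0 (map (fun s => Wr (Bset r p m) w s * circle_avg s f) (norm_spectrum (Bset r p m)))
  = lsum (Bset r p m) (fun x => w x * f x).
Proof.
  intros Hp Hpt Hr Hmon m hw [c Hc].
  assert (Hf : forall x y, f (x, y) = DS t (fun a b => c a b * x ^ a * y ^ b)) by exact Hc.
  assert (Hm : (1 <= m)%nat) by (unfold m; lia).
  assert (Ht : (t < 2 * m)%nat) by (unfold m; lia).
  assert (Hperm : Permutation (norm_spectrum (Bset r p m)) (map r (seq 1 p))).
  { apply NoDup_Permutation.
    - apply NoDup_nodup.
    - apply FinFun.Injective_map_NoDup_in; [|apply seq_NoDup].
      intros a b Ha Hb E. apply in_seq in Ha, Hb. apply (r_inj p r); auto; lia.
    - intros s. rewrite spectrum_B by auto. rewrite in_map_iff. split.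
      + intros [k [Hk ->]]. exists k. split; auto. apply in_seq; lia.
      + intros [k [<- Hk]]. apply in_seq in Hk. exists k. split; auto; lia. }
  rewrite (sum_perm _ _ _ Hperm), map_map.
  change (fold_right Rplus 0 (map ?F (seq 1 p))) with (ls (seq 1 p) F).
  rewrite lsum_B.
  rewrite (ls_ext _ _ (fun k => INR m * weight_formula r p m k * DS t (fun a b => c a b * r k ^ (a + b) * c0 (Lmon a b)))).
  2:{ intros k Hk. apply in_seq in Hk. rewrite (Wr_B r p m w k); auto; [|lia]. rewrite (avg_poly t c f); auto. }
  rewrite (ls_ext (seq 1 p) (fun k => ls (seq 1 m) (fun j => w (bpt r m k j) * f (bpt r m k j)))
     (fun k => INR m * weight_formula r p m k * DS t (fun a b => c a b * r k ^ (a + b) * c0 (Lmon a b)) +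
               DS t (fun a b => c a b * INR m * (cm m (Lmon a b) * (weight_formula r p m k * ((-1) ^ k * r k ^ (a + b))))))).
  2:{ intros k Hk. apply in_seq in Hk.
      rewrite (ls_ext _ _ (fun j => weight_formula r p m k * f (bpt r m k j))).
      2:{ intros j Hj. apply in_seq in Hj. rewrite hw; auto; lia. }
      rewrite ls_scal, (dsum_poly t c f r m k); auto.
      rewrite !DS_scal, <- DS_plus. apply DS_ext. intros; ring. }
  rewrite ls_plus, ls_DS.
  rewrite DS_zero. ring.
  intros a b Hab. rewrite !ls_scal. unfold m. rewrite (vanish t p r a b); auto. ring.
Qed.


Lemma spectrum_perm t p (r : nat -> R) :
  (forall k, (1 <= k <= p)%nat -> 0 < r k) ->
  (forall k l, (1 <= k)%nat -> (k < l)%nat -> (l <= p)%nat -> r k < r l) ->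
  (1 <= t + 3 - 2 * p)%nat ->
  Permutation (norm_spectrum (Bset r p (t + 3 - 2 * p))) (map r (seq 1 p)).
Proof.
  intros Hr Hmon Hm. apply NoDup_Permutation.
  - apply NoDup_nodup.
  - apply FinFun.Injective_map_NoDup_in; [|apply seq_NoDup].
    intros a b Ha Hb E. apply in_seq in Ha, Hb. apply (r_inj p r); auto; lia.
  - intros s. rewrite spectrum_B by auto. rewrite in_map_iff. split.
    + intros [k [Hk ->]]. exists k. split; auto. apply in_seq; lia.
    + intros [k [<- Hk]]. apply in_seq in Hk. exists k. split; auto; lia.
Qed.

Theorem mainTheorem2 (t p : nat) (r : nat -> R) :
  (1 <= p)%nat -> (p <= (t + 5) / 4)%nat ->
  (forall k, (1 <= k <= p)%nat -> 0 < r k) ->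
  (forall k l, (1 <= k)%nat -> (k < l)%nat -> (l <= p)%nat -> r k < r l) ->
  let m := (t + 3 - 2 * p)%nat in
  let B := Bset r p m in
  (exists w : pt -> R, forall k j, (1 <= k <= p)%nat -> (1 <= j <= m)%nat ->
       w (bpt r m k j) = weight_formula r p m k) /\
  (forall w : pt -> R,
     (forall k j, (1 <= k <= p)%nat -> (1 <= j <= m)%nat ->
        w (bpt r m k j) = weight_formula r p m k) ->
     (forall x, In x B -> 0 < w x) /\
     (Nat.odd t = true -> antipodal B w) /\
     (forall s, In s (norm_spectrum B) <-> exists k, (1 <= k <= p)%nat /\ s = r k) /\
     tight_design B w t).
Proof.
  intros Hp Hpt0 Hr Hmon m B.
  assert (Hpt : (4 * p <= t + 5)%nat).
  { pose proof (Nat.div_mod (t+5) 4 ltac:(lia)). pose proof (Nat.mod_upper_bound (t+5) 4 ltac:(lia)). lia. }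
  assert (Hm : (1 <= m)%nat) by (unfold m; lia).
  split.
  - exists (wdef r p m). intros k j Hk Hj. apply wdef_ok; auto.
  - intros w hw.
    assert (Hpos : forall x, In x B -> 0 < w x).
    { intros x Hx. apply in_B in Hx. destruct Hx as [k [j [Hk [Hj ->]]]].
      rewrite hw by auto. apply weight_pos; auto. }
    split; [exact Hpos|]. split.
    + intros Ho. apply Nat.odd_spec in Ho. destruct Ho as [u Hu].
      apply (antipodal_B r p m (u + 2 - p)); auto; unfold m in *; lia.
    + split.
      * intros s. apply spectrum_B; auto.
      * split.
        -- split.
           ++ split; [apply NoDup_B; auto|]. split; [|exact Hpos].
              intros x Hx E. apply in_B in Hx. destruct Hx as [k [j [Hk [Hj ->]]]].
              assert (E2 := f_equal norm2 E). rewrite norm2_bpt in E2 by (apply Hr; auto).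
              unfold norm2 in E2. replace (fst (0, 0) ^ 2 + snd (0, 0) ^ 2) with 0 in E2 by (simpl; ring).
              rewrite sqrt_0 in E2. specialize (Hr k Hk). lra.
           ++ intros f Hf. apply design_eq; auto.
        -- unfold B, m in *. rewrite length_B.
           rewrite (Permutation_length (spectrum_perm t p r Hr Hmon Hm)).
           rewrite length_map, length_seq. symmetry. apply N_count. exact Hpt.
Qed.
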